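(* Consider $\dot x=f(x)+Bu+Cw$ with $x\in\mathbb{R}^n$, $u\in\mathbb{R}^p$, $w\in\mathbb{R}^r$, $f$ continuously differentiable, $B\in\mathbb{R}^{n\times p}$, $C\in\mathbb{R}^{n\times r}$, and suppose there are matrices $A_1,\dots,A_k\in\mathbb{R}^{n\times n}$ with $D_xf(x)\in\mathrm{conv}\{A_1,\dots,A_k\}$ for all $x\in\mathbb{R}^n$. Let $H\in\mathbb{R}^{m\times n}$ have full column rank, $\underline h\le\overline h\in\mathbb{R}^m$, $\mathcal P=\{x:\underline h\le Hx\le\overline h\}$, let $K=\{x:Hx\ge0_m\}$ with generating matrix $V\in\mathbb{R}^{n\times q}$ (i.e. $K=\{Vy:y\ge0_q\}$), and let $\underline\eta,\overline\eta\in\mathbb{R}^n$ satisfy $H\underline\eta=\underline h$, $H\overline\eta=\overline h$. Let $\underline w\le\overline w\in\mathbb{R}^r$. Suppose $(F^*,\alpha^* )\in\mathbb{R}^{p\times n}\times\mathbb{R}$ satisfies $H(A_i+BF^*+\alpha^*I_n)V\ge0_{m\times q}$ for all $i=1,\dots,k$, $H(f(\overline\eta)+BF^*\overline\eta)+(HC)^+\overline w+(HC)^-\underline w\le0_m$, $H(f(\underline\eta)+BF^*\underline\eta)+(HC)^+\underline w+(HC)^-\overline w\ge0_m$. Then $\mathcal P$ is forward invariant for the closed-loop system $\dot x=f(x)+BF^*x+Cw(t)$ for every disturbance signal $t\mapsto w(t)$ with $w(t)\in[\underline w,\overline w]$ for all $t\ge0$.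
   Context: For a matrix $M$, $M^+$ and $M^-$ denote its entrywise positive and negative parts: $(M^+)_{ij}=\max(M_{ij},0)$, $(M^-)_{ij}=\min(M_{ij},0)$. Vector/matrix inequalities are entrywise; $[\underline w,\overline w]=\{w:\underline w\le w\le\overline w\}$. $\mathrm{conv}$ denotes convex hull. A set $\mathcal P$ is forward invariant if every trajectory starting in $\mathcal P$ remains in $\mathcal P$ for all $t\ge0$. *)

(* Defs.v *)
From HB Require Import structures.
From mathcomp Require Import all_boot all_order all_algebra.
From mathcomp Require Import all_classical all_reals all_analysis.
Set Implicit Arguments. Unset Strict Implicit. Unset Printing Implicit Defensive.
Import Order.TTheory GRing.Theory Num.Theory.
Import numFieldNormedType.Exports.
Local Open Scope ring_scope.
Local Open Scope classical_set_scope.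

Definition mxle (R : realType) m n (A B : 'M[R]_(m, n)) : Prop :=
  forall i j, A i j <= B i j.

Definition mxpos (R : realType) m n (M : 'M[R]_(m, n)) : 'M[R]_(m, n) :=
  map_mx (fun a => Num.max a 0) M.
Definition mxneg (R : realType) m n (M : 'M[R]_(m, n)) : 'M[R]_(m, n) :=
  map_mx (fun a => Num.min a 0) M.

(* Jacobian matrix D_x f(x) of f : R^n -> R^n (column convention):
   (Dx f x) i j = d f_i / d x_j.  The library's [jacobian] uses row vectors
   (v *m jacobian f p = 'D_v f p), hence the transpositions. *)
Definition Dx (R : realType) n (f : 'cV[R]_n -> 'cV[R]_n) (x : 'cV[R]_n)
  : 'M[R]_n := (jacobian (fun v : 'rV[R]_n => (f v^T)^T) x^T)^T.

Definition in_conv (R : realType) n k (A : 'I_k -> 'M[R]_n) (M : 'M[R]_n) : Prop :=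
  exists lam : 'I_k -> R, (forall i, 0 <= lam i) /\ \sum_(i < k) lam i = 1 /\
    M = \sum_(i < k) lam i *: A i.

Definition C1 (R : realType) n (f : 'cV[R]_n -> 'cV[R]_n) : Prop :=
  (forall x, differentiable f x) /\ continuous (Dx f).

Definition in_polytope (R : realType) m n (H : 'M[R]_(m, n)) (hl hu : 'cV[R]_m) (x : 'cV[R]_n)
  : Prop := mxle hl (H *m x) /\ mxle (H *m x) hu.

Definition solution_on_Rplus (R : realType) n (g : R -> 'cV[R]_n -> 'cV[R]_n)
  (x : R -> 'cV[R]_n) : Prop :=
  {within [set t : R | 0 <= t], continuous x} /\
  forall t : R, 0 < t -> is_derive t 1 x (g t (x t)).

(* Main.v *)
Require Import Defs.
From HB Require Import structures.
From mathcomp Require Import all_boot all_order all_algebra.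
From mathcomp Require Import all_classical all_reals all_analysis.
From mathcomp Require Import ring lra.
Import Order.TTheory GRing.Theory Num.Theory.
Import numFieldNormedType.Exports.
Local Open Scope ring_scope.
Local Open Scope classical_set_scope.

Section Norms.
Context {R : realType}.

Lemma mxnorm_entry m n (M : 'M[R]_(m, n)) i j : `|M i j| <= `|M|.
Proof.
have -> : `|M| = mx_norm M by []. rewrite mx_normrE.
exact: (le_bigmax _ (fun ij : 'I_m * 'I_n => `|M ij.1 ij.2|) (i, j)).
Qed.

Lemma mxnorm_le m n (M : 'M[R]_(m, n)) c : 0 <= c ->
  (forall i j, `|M i j| <= c) -> `|M| <= c.
Proof.
move=> c0 H; have -> : `|M| = mx_norm M by []. rewrite mx_normrE.
by apply: bigmax_le => // -[i j] _; exact: H.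
Qed.

End Norms.

Section Norms2.
Context {R : realType}.
Definition S1 m n (M : 'M[R]_(m, n)) : R := \sum_i \sum_j `|M i j|.
Arguments S1 {m n}.

Lemma S1_ge0 m n (M : 'M[R]_(m, n)) : 0 <= S1 M.
Proof. by apply: sumr_ge0 => i _; apply: sumr_ge0. Qed.

Lemma mulmx_norm m n p (M : 'M[R]_(m, n)) (v : 'M[R]_(n, p)) :
  `|M *m v| <= S1 M * `|v|.
Proof.
apply: mxnorm_le; first by rewrite mulr_ge0 // S1_ge0.
move=> i j; rewrite mxE.
apply: le_trans (ler_norm_sum _ _ _) _.
apply: (@le_trans _ _ (\sum_l `|M i l| * `|v|)).
  apply: ler_sum => l _; rewrite normrM ler_wpM2l //; exact: mxnorm_entry.
rewrite -mulr_suml ler_wpM2r //.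
rewrite /S1 (bigD1 i) //= lerDl; apply: sumr_ge0 => k _; apply: sumr_ge0. by [].
Qed.

Lemma entry_le_mul m n p (M : 'M[R]_(m, n)) (v : 'M[R]_(n, p)) i j :
  - (S1 M * `|v|) <= (M *m v) i j.
Proof.
rewrite lerNl; apply: le_trans; last exact: mulmx_norm.
have H1 := @mxnorm_entry R _ _ (M *m v) i j.
have H2 : - (M *m v) i j <= `|(M *m v) i j| by rewrite -normrN ler_norm.
exact: le_trans H2 H1.
Qed.
End Norms2.

Lemma real_ind (R : realType) (P : R -> Prop) :
  (forall t, 0 <= t -> (forall s, 0 <= s -> s < t -> P s) -> P t) ->
  (forall t, 0 <= t -> P t -> exists2 h, 0 < h & forall s, t < s -> s < t + h -> P s) ->
  forall t, 0 <= t -> P t.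
Proof.
move=> Hi Hii T T0.
pose A := [set s : R | 0 <= s <= T /\ forall u, 0 <= u -> u < s -> P u].
have A0 : A 0 by split; [rewrite lexx T0 | move=> u u0 u0'; exfalso; lra].
have An : A !=set0 by exists 0.
have ubT : ubound A T by move=> s [/andP[]].
have hs : has_sup A by split => //; exists T.
set S := sup A.
have S0 : 0 <= S by exact: (sup_upper_bound hs).
have ST : S <= T by exact: ge_sup.
have below : forall u, 0 <= u -> u < S -> P u.
  move=> u u0 uS; have [s [_ Hs] us] := sup_gt An uS; exact: Hs.
have PS : P S by apply: Hi.
have [ST'|] := ltrP S T; last first.
  by move=> TS; have -> : T = S by apply/eqP; rewrite eq_le TS ST.
have [h h0 Hh] := Hii S S0 PS.
set m := Num.min h (T - S).
have : m <= m by [].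
rewrite {2}/m le_min => /andP[mh mT].
have m0 : 0 < m by rewrite lt_min h0 subr_gt0.
pose s' := S + m / 2.
have As' : A s'.
  split; first by apply/andP; split; rewrite /s'; lra.
  move=> u u0 us'.
  have [uS|Su] := ltrP u S; first exact: below.
  move: Su; rewrite le_eqVlt => /orP[/eqP <-//|Su].
  apply: Hh => //; rewrite /s' in us'; lra.
have H2 : s' <= S := sup_upper_bound hs As'. rewrite /s' in H2; lra.
Qed.

Lemma deriv_approx (R : realType) (V : normedModType R) (d : R -> V) (t : R) (D : V) :
  is_derive t 1 d D -> forall e, 0 < e ->
  exists2 h, 0 < h & forall s, 0 < s -> s < h -> `|d (t + s) - d t - s *: D| <= e * s.
Proof.
move=> [dd dv] e e0.
have Hc : (fun h : R => h^-1 *: ((d \o shift t) (h *: (1:R)) - d t)) @ 0^' --> D.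
  by rewrite -dv; exact: dd.
move: Hc => /cvgrPdist_le /(_ e e0).
move=> /nbhs_ballP [h h0 Hh]; exists h => // s s0 sh.
have := Hh s; rewrite /ball /= sub0r normrN gtr0_norm // => /(_ sh).
rewrite gt_eqF // => /(_ isT).
rewrite [s%:A]mulr1 [s + t]addrC => H.
have -> : d (t+s) - d t - s *: D = s *: (s^-1 *: (d (t + s) - d t) - D).
  by rewrite scalerBr scalerA mulfV ?gt_eqF // scale1r.
by rewrite normrZ gtr0_norm // distrC mulrC ler_pM2r.
Qed.

Lemma deriv_cont (R : realType) (V : normedModType R) (d : R -> V) (t : R) (D : V) :
  is_derive t 1 d D -> forall e, 0 < e ->
  exists2 h, 0 < h & forall s, `|t - s| < h -> `|d t - d s| < e.
Proof.
move=> [dd _] e e0.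
have /differentiable_continuous Hc : differentiable d t by apply/derivable1_diffP.
move: Hc => /cvgrPdist_lt /(_ e e0) /nbhs_ballP [h h0 Hh].
by exists h => // s hs; apply: Hh; rewrite /ball /=.
Qed.

Lemma within0_cont (R : realType) (V : normedModType R) (d : R -> V) :
  {within [set t : R | 0 <= t], continuous d} -> forall e, 0 < e ->
  exists2 h, 0 < h & forall s, 0 <= s -> s < h -> `|d 0 - d s| < e.
Proof.
move=> Hc e e0.
have Hc1 : {within `[0, 1], continuous d}.
  apply: continuous_subspaceW Hc => x /=; rewrite in_itv /= => /andP[] //.
have [_ Hr _] := (continuous_within_itvP d (@ltr01 R)).1 Hc1.
move: Hr => /cvgrPdist_lt /(_ e e0) /nbhs_ballP [h h0 Hh].
exists h => // s s0 sh.
have [->|sn0] := eqVneq s 0; first by rewrite subrr normr0.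
apply: Hh; last by rewrite lt_neqAle eq_sym sn0 s0.
by rewrite /ball /= sub0r normrN ger0_norm.
Qed.
Arguments mxnorm_entry {R m n}.
Arguments S1 {R m n}. Arguments entry_le_mul {R m n p}. Arguments mulmx_norm {R m n p}.
Arguments S1_ge0 {R m n}.
Arguments deriv_cont {R V d t D}. Arguments deriv_approx {R V d t D}. Arguments within0_cont {R V d}.

Section Cone.
Context {R : realType} {m n : nat} (H : 'M[R]_(m, n)).
Definition Kc (v : 'cV[R]_n) := mxle (0 : 'cV[R]_m) (H *m v).

Lemma Kc_add u v : Kc u -> Kc v -> Kc (u + v).
Proof. move=> hu hv i j; have := hu i j; have := hv i j; rewrite mulmxDr !mxE; lra. Qed.

Lemma Kc_scale a v : 0 <= a -> Kc v -> Kc (a *: v).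
Proof. move=> a0 hv i j; have := hv i j; rewrite -scalemxAr !mxE => h; exact: mulr_ge0. Qed.

Lemma Kc_close v : (forall e, 0 < e -> exists k, Kc k /\ `|v - k| <= e) -> Kc v.
Proof.
move=> Hv i j; have -> : (0:'cV[R]_m) i j = 0 by rewrite mxE.
have Hall : forall e, 0 < e -> - (S1 H * e) <= (H *m v) i j.
  move=> e e0; have [k [Hk Hvk]] := Hv e e0.
  have : (H *m v) = H *m k + H *m (v - k) by rewrite -mulmxDr addrC subrK.
  move=> ->; rewrite mxE.
  have h1 := Hk i j; have e0' : (0:'cV[R]_m) i j = 0 by rewrite mxE.
  rewrite e0' in h1.
  have h2 := entry_le_mul H (v - k) i j.
  have h3 : S1 H * `|v - k| <= S1 H * e by rewrite ler_wpM2l // S1_ge0.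
  lra.
have S0 := S1_ge0 H.
rewrite leNgt; apply/negP => Hneg.
set a := (H *m v) i j in Hall Hneg.
have p0 : 0 < S1 H + 1 by lra.
have e0 : 0 < (- a) / (2 * (S1 H + 1)) by rewrite divr_gt0 //; lra.
have := Hall _ e0.
have -> : S1 H * (- a / (2 * (S1 H + 1))) = (- a) * (S1 H / (S1 H + 1)) / 2.
  by rewrite mulrA [S1 H * - a]mulrC -mulrA invfM mulrCA [2^-1 * _]mulrC !mulrA.
have : S1 H / (S1 H + 1) <= 1 by rewrite ler_pdivrMr // mul1r; lra.
have : 0 <= S1 H / (S1 H + 1) by rewrite divr_ge0 //; lra.
move: (S1 H / (S1 H + 1)) => q q0 q1 Hq.
nra.
Qed.

Lemma invariance (d : R -> 'cV[R]_n) (phi : R -> 'cV[R]_n -> 'cV[R]_n) (L alpha : R) :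
  0 <= L ->
  (forall e : R, 0 < e -> exists2 h : R, 0 < h & forall s : R, 0 <= s -> s < h -> `|d 0 - d s| < e) ->
  (forall t : R, 0 < t -> is_derive t 1 d (phi t (d t))) ->
  (forall (t : R) u v, 0 < t -> `|phi t u - phi t v| <= L * `|u - v|) ->
  (forall (t : R) v, 0 < t -> Kc v -> Kc (phi t v + alpha *: v)) ->
  Kc (d 0) -> forall t : R, 0 <= t -> Kc (d t).
Proof.
move=> L0 Hc Hd Hl Hk K0.
pose M := L + 1.
have M0 : 0 < M by rewrite /M; lra.
suff Q : forall eps : R, 0 < eps -> forall t : R, 0 <= t -> forall eta : R, 0 < eta ->
    exists k, Kc k /\ `|d t - k| <= eps * expR (M * t) + eta.
  move=> t t0; apply: Kc_close => e e0.
  have ex0 := expR_gt0 (M * t).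
  have eps0 : 0 < e / (2 * expR (M * t)) by rewrite divr_gt0 // mulr_gt0.
  have [k [Kk Hk']] := Q _ eps0 t t0 (e / 2) ltac:(by rewrite divr_gt0).
  exists k; split => //; apply: le_trans Hk' _.
  have -> : e / (2 * expR (M * t)) * expR (M * t) = e / 2.
    by field; rewrite gt_eqF.
  lra.
move=> eps eps0; apply: real_ind.
- move=> t t0 IH eta eta0.
  have [->|tn0] := eqVneq t 0.
    exists (d 0); split => //; rewrite subrr normr0.
    have := expR_ge0 (M * 0); have := ltW eps0; have := ltW eta0; nra.
  have tp : 0 < t by rewrite lt_neqAle eq_sym tn0 t0.
  have [del del0 Hdel] := deriv_cont (Hd t tp) (eta/2) ltac:(by rewrite divr_gt0).
  set q := Num.min del t.
  have : q <= q by [].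
  rewrite {2}/q le_min => /andP[qd qt].
  have q0 : 0 < q by rewrite lt_min del0 tp.
  have s0 : 0 <= t - q / 2 by lra.
  have st : t - q / 2 < t by lra.
  have [k [Kk Hk']] := IH _ s0 st (eta / 2) ltac:(by rewrite divr_gt0).
  exists k; split => //.
  have E : d t - k = (d t - d (t - q/2)) + (d (t - q/2) - k) by rewrite addrA subrK.
  rewrite E; apply: le_trans (ler_normD _ _) _.
  have h1 : `|d t - d (t - q / 2)| < eta / 2.
    by apply: Hdel; rewrite opprB addrC subrK gtr0_norm ?divr_gt0 //; lra.
  have h2 : expR (M * (t - q / 2)) <= expR (M * t).
    by rewrite ler_expR ler_wpM2l ?ltW //; lra.
  have h3 : eps * expR (M * (t - q / 2)) <= eps * expR (M * t).
    by apply: ler_wpM2l => //; exact: ltW.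
  lra.
- move=> t t0 Qt.
  have [->|tn0] := eqVneq t 0.
    have [h h0 Hh] := Hc _ eps0.
    exists h => // s s0 sh eta eta0.
    exists (d 0); split => //.
    have h1 := Hh s (ltW s0) ltac:(by rewrite add0r in sh).
    have h2 : 1 <= expR (M * s).
      by apply: le_trans (expR_ge1Dx _); rewrite lerDl mulr_ge0 ?ltW.
    have h3 : eps <= eps * expR (M * s) by have := ltW eps0; nra.
    rewrite distrC; lra.
  have tp : 0 < t by rewrite lt_neqAle eq_sym tn0 t0.
  set g := eps * expR (M * t).
  have g0 : 0 < g by rewrite mulr_gt0 // expR_gt0.
  have [h1 h10 Hh1] := deriv_approx (Hd t tp) _ g0.
  set c := (`|alpha| + 1)^-1.
  have c0 : 0 < c by rewrite invr_gt0; have := normr_ge0 alpha; lra.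
  set h := Num.min h1 (Num.min 1 c).
  have : h <= h by [].
  rewrite {2}/h !le_min => /andP[hh1 /andP[hh2 hh3]].
  have h0 : 0 < h by rewrite !lt_min h10 c0 ltr01.
  exists h => // tau ttau tauh eta eta0.
  set s := tau - t.
  have s0 : 0 < s by rewrite /s; lra.
  have sh : s < h by rewrite /s; lra.
  have tauE : tau = t + s by rewrite /s addrC subrK.
  have L1 : 0 < 1 + L by lra.
  set eta' := eta / (1 + L).
  have eta'0 : 0 < eta' by rewrite divr_gt0.
  have eta'E : eta' * (1 + L) = eta by rewrite /eta' mulrAC -mulrA mulfV ?gt_eqF // mulr1.
  have [k0 [Kk0 Hk0]] := Qt eta' eta'0.
  have asc : 0 <= 1 - alpha * s.
    have : alpha * s <= `|alpha| * s by apply: ler_wpM2r; [exact: ltW | exact: ler_norm].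
    have : `|alpha| * s <= `|alpha| * c.
      by apply: ler_wpM2l => //; lra.
    have : `|alpha| * c < 1.
      rewrite /c ltr_pdivrMr; last by have := normr_ge0 alpha; lra.
      lra.
    lra.
  exists ((1 - alpha * s) *: k0 + s *: (phi t k0 + alpha *: k0)); split.
    by apply: Kc_add; apply: Kc_scale => //; [exact: ltW | exact: Hk].
  have E : d tau - ((1 - alpha * s) *: k0 + s *: (phi t k0 + alpha *: k0)) =
    (d (t + s) - d t - s *: phi t (d t)) + (d t - k0) + s *: (phi t (d t) - phi t k0).
    rewrite tauE; apply/matrixP => i j; rewrite !mxE; ring.
  rewrite E.
  have n1 : `|d (t + s) - d t - s *: phi t (d t)| <= g * s by apply: Hh1; lra.
  have n2 : `|s *: (phi t (d t) - phi t k0)| <= s * (L * `|d t - k0|).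
    by rewrite normrZ gtr0_norm //; apply: ler_wpM2l; [exact: ltW | exact: Hl].
  have n3 := ler_normD (d (t + s) - d t - s *: phi t (d t) + (d t - k0))
                       (s *: (phi t (d t) - phi t k0)).
  have n4 := ler_normD (d (t + s) - d t - s *: phi t (d t)) (d t - k0).
  have ex : g * (1 + M * s) <= eps * expR (M * tau).
    rewrite tauE [M * (t + s)]mulrDr expRD mulrA -/g.
    apply: ler_wpM2l; [exact: ltW | exact: expR_ge1Dx].
  set x := `|d t - k0| in Hk0 n2 n4.
  have x0 : 0 <= x := normr_ge0 _.
  have sL : s * L * eta' <= L * eta'.
    apply: ler_wpM2r; first exact: ltW.
    have : s <= 1 by lra.
    nra.
  rewrite -/g in Hk0.
  have hx : s * L * x <= s * L * (g + eta').
    by apply: ler_wpM2l => //; rewrite mulr_ge0 // ltW.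
  have E2 : g * (1 + M * s) = g + g * s + s * L * g + g * s * 0 by rewrite /M; ring.
  rewrite E2 in ex; rewrite -eta'E.
  nra.
Qed.
End Cone.

Section Calc.
Context {R : realType}.

Lemma lip_cont (V W : normedModType R) (l : V -> W) (K : R) :
  (forall u w, `|l u - l w| <= K * `|u - w|) -> continuous l.
Proof.
move=> Hl x; apply/cvgrPdist_lt => e e0.
have K1 : 0 < `|K| + 1 by have := normr_ge0 K; lra.
apply/nbhs_ballP; exists (e / (`|K| + 1)); first by rewrite /= divr_gt0.
move=> y; rewrite -ball_normE /= => hy.
have h1 := Hl x y.
have h2 : K * `|x - y| <= `|K| * `|x - y| by apply: ler_wpM2r => //; exact: ler_norm.
have h3 : `|K| * `|x - y| <= `|K| * (e / (`|K| + 1)).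
  by apply: ler_wpM2l => //; exact: ltW.
have h4 : `|K| * (e / (`|K| + 1)) < e.
  rewrite mulrA ltr_pdivrMr //; nra.
lra.
Qed.

Lemma is_derive_of_cvg (V : normedModType R) (F : R -> V) (s : R) (D : V) :
  (fun h : R => h^-1 *: ((F \o shift s) (h *: (1:R)) - F s)) @ 0^' --> D ->
  is_derive s 1 F D.
Proof.
move=> Hc; split; first by apply/cvg_ex; exists D.
exact: cvg_lim Hc.
Qed.


Lemma is_derive_lin (V W : normedModType R) (l : V -> W) (F : R -> V) (s : R) (D : V) :
  (forall (a : R) u v, l (a *: u + v) = a *: l u + l v) -> continuous l ->
  is_derive s 1 F D -> is_derive s 1 (l \o F) (l D).
Proof.
move=> Hlin Hc [dd dv].
have l0 : l 0 = 0.
  have := Hlin 1 0 0; rewrite scale1r addr0 => /(congr1 (fun z => z - l 0)).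
  by rewrite subrr addrK scale1r.
have lB : forall u v, l (u - v) = l u - l v.
  by move=> u v; rewrite addrC -scaleN1r Hlin scaleN1r addrC.
have lZ : forall (a : R) u, l (a *: u) = a *: l u.
  by move=> a u; rewrite -[a *: u]addr0 Hlin l0 addr0.
apply: is_derive_of_cvg.
have Hq : (fun h : R => h^-1 *: ((F \o shift s) (h *: (1:R)) - F s)) @ 0^' --> D.
  by rewrite -dv; exact: dd.
suff -> : (fun h : R => h^-1 *: (((l \o F) \o shift s) (h *: (1:R)) - (l \o F) s)) =
   l \o (fun h : R => h^-1 *: ((F \o shift s) (h *: (1:R)) - F s)).
  exact: (continuous_cvg _ (Hc D) Hq).
by apply: funext => h /=; rewrite lZ lB.
Qed.

Lemma is_derive_line n (f : 'cV[R]_n -> 'cV[R]_n) (v y : 'cV[R]_n) (s : R) :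
  differentiable f (s *: v + y) ->
  is_derive s 1 (fun s : R => f (s *: v + y)) ('d f (s *: v + y) v).
Proof.
move=> df.
have [dd dv] : is_derive (s *: v + y) v f ('d f (s *: v + y) v).
  by split; [exact: diff_derivable | exact: deriveE].
apply: is_derive_of_cvg.
have Hq : (fun h : R => h^-1 *: ((f \o shift (s *: v + y)) (h *: v) - f (s *: v + y))) @ 0^'
   --> 'd f (s *: v + y) v.
  by rewrite -dv; exact: dd.
suff -> : (fun h : R => h^-1 *: (((fun s : R => f (s *: v + y)) \o shift s) (h *: (1:R)) - f (s *: v + y))) =
  (fun h : R => h^-1 *: ((f \o shift (s *: v + y)) (h *: v) - f (s *: v + y))) by [].
by apply: funext => h /=; rewrite [h *: 1]mulr1 scalerDl addrA.
Qed.

Lemma trmx_cont m n : continuous (@trmx R m n).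
Proof.
apply: (@lip_cont _ _ _ 1) => u w; rewrite mul1r -linearB /=.
apply: mxnorm_le => // i j; rewrite mxE; exact: mxnorm_entry.
Qed.


Lemma dtr a b (M : 'M[R]_(a, b)) : differentiable (@trmx R a b) M.
Proof. by apply: linear_differentiable; exact: trmx_cont. Qed.

Lemma is_derive_dir (V W : normedModType R) (f : V -> W) (x v : V) (D : W) :
  is_derive (0:R) 1 (fun h : R => f (h *: v + x)) D -> is_derive x v f D.
Proof.
move=> [dd dv].
have Hq : (fun h : R => h^-1 *: (((fun h : R => f (h *: v + x)) \o shift 0) (h *: (1:R)) - f (0 *: v + x))) @ 0^' --> D.
  by rewrite -dv; exact: dd.
have E : (fun h : R => h^-1 *: (((fun h : R => f (h *: v + x)) \o shift 0) (h *: (1:R)) - f (0 *: v + x))) =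
   (fun h : R => h^-1 *: ((f \o shift x) (h *: v) - f x)).
  by apply: funext => h /=; rewrite [h *: 1]mulr1 addr0 scale0r add0r.
rewrite E in Hq; split; first by apply/cvg_ex; exists D.
exact: cvg_lim Hq.
Qed.

Lemma Dx_mul n (f : 'cV[R]_n -> 'cV[R]_n) (z v : 'cV[R]_n) :
  differentiable f z -> Dx f z *m v = 'd f z v.
Proof.
move=> df.
pose G := (@trmx R n 1) \o (f \o (@trmx R 1 n)).
have dfT : differentiable (f \o (@trmx R 1 n)) z^T.
  by apply: differentiable_comp; [exact: dtr | rewrite /= trmxK; exact: df].
have dG : differentiable G z^T.
  by apply: differentiable_comp; [exact: dfT | exact: dtr].
have -> : Dx f z = (jacobian G z^T)^T by [].
have -> : (jacobian G z^T)^T *m v = (v^T *m jacobian G z^T)^T by rewrite trmx_mul trmxK.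
rewrite -deriveEjacobian //.
have HD : is_derive z^T v^T G (('d f z v)^T).
  apply: is_derive_dir.
  have -> : (fun h : R => G (h *: v^T + z^T)) = (@trmx R n 1) \o (fun h : R => f (h *: v + z)).
    by apply: funext => h; rewrite /G /= linearD linearZ /= !trmxK.
  have L := @is_derive_line n f v z 0.
  rewrite scale0r add0r in L.
  apply: (@is_derive_lin _ _ (@trmx R n 1)) => //; last exact: L df.
    by move=> a u w; rewrite linearD linearZ.
  exact: trmx_cont.
by rewrite (@derive_val _ _ _ _ _ _ _ HD) trmxK.
Qed.

Lemma mvt_row n (f : 'cV[R]_n -> 'cV[R]_n) (c : 'rV[R]_n) (x y : 'cV[R]_n) :
  (forall z, differentiable f z) ->
  exists xi, (c *m (f x - f y)) 0 0 = (c *m (Dx f xi *m (x - y))) 0 0.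
Proof.
move=> df.
pose v := x - y.
pose psi := fun s : R => (c *m f (s *: v + y)) 0 0.
pose dpsi := fun s : R => (c *m (Dx f (s *: v + y) *m v)) 0 0.
have lc : continuous (fun u : 'cV[R]_n => (c *m u) 0 0).
  apply: (@lip_cont _ _ _ (S1 c)) => u w.
  have -> : (c *m u) 0 0 - (c *m w) 0 0 = (c *m (u - w)) 0 0.
    by rewrite mulmxBr [(c *m u - c *m w) 0 0]mxE [(- (c *m w)) 0 0]mxE.
  apply: le_trans (mulmx_norm c (u - w)).
  exact: (mxnorm_entry (c *m (u - w)) 0 0).
have Hd : forall s : R, is_derive s 1 psi (dpsi s).
  move=> s; rewrite /dpsi Dx_mul //.
  apply: (@is_derive_lin _ _ (fun u : 'cV[R]_n => (c *m u) 0 0) (fun s => f (s *: v + y))) => //.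
    move=> a u w; rewrite mulmxDr -scalemxAr.
    by rewrite [(a *: (c *m u) + c *m w) 0 0]mxE [(a *: (c *m u)) 0 0]mxE.
  exact: (@is_derive_line n f v y s (df _)).
have cont : {within `[0, 1], continuous psi}.
  by apply: derivable_within_continuous => s _; have [] := Hd s.
have [xi _ Hxi] := MVT ltr01 (fun s _ => Hd s) cont.
exists (xi *: v + y).
rewrite subr0 mulr1 /dpsi /psi scale1r scale0r add0r /v subrK in Hxi.
rewrite -Hxi mulmxBr [(c *m f x - c *m f y) 0 0]mxE [(- (c *m f y)) 0 0]mxE.
by [].
Qed.

End Calc.

Section Problem.
Context {R : realType}.

Lemma nonneg_mul a b (P : 'M[R]_(a, b)) (z : 'cV[R]_b) j :
  (forall i k, 0 <= P i k) -> (forall k, 0 <= z k 0) -> 0 <= (P *m z) j 0.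
Proof. by move=> HP Hz; rewrite mxE; apply: sumr_ge0 => k _; apply: mulr_ge0. Qed.

Lemma entry_row a b c (M : 'M[R]_(a, b)) (X : 'M[R]_(b, c)) j l :
  (M *m X) j l = (row j M *m X) 0 l.
Proof. by rewrite -row_mul [RHS]mxE. Qed.

Lemma conv_entry n k (A : 'I_k -> 'M[R]_n) lam i j :
  (forall l, 0 <= lam l) -> \sum_(l < k) lam l = 1 ->
  `|(\sum_(l < k) lam l *: A l) i j| <= \sum_(l < k) `|A l i j|.
Proof.
move=> l0 l1; rewrite summxE.
apply: le_trans (ler_norm_sum _ _ _) _.
apply: ler_sum => l _; rewrite mxE normrM ger0_norm //.
rewrite ler_piMl //.
rewrite -l1 (bigD1 l) //= lerDl; exact: sumr_ge0.
Qed.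

Variables (n k : nat) (f : 'cV[R]_n -> 'cV[R]_n) (A : 'I_k -> 'M[R]_n).
Hypothesis df : forall z, differentiable f z.
Hypothesis conv : forall x, in_conv A (Dx f x).

Definition LA := \sum_i \sum_j \sum_(l < k) `|A l i j|.

Lemma LA_ge0 : 0 <= LA.
Proof. by apply: sumr_ge0 => i _; apply: sumr_ge0 => j _; apply: sumr_ge0. Qed.

Lemma f_lip x y : `|f x - f y| <= LA * `|x - y|.
Proof.
apply: mxnorm_le; first by rewrite mulr_ge0 // LA_ge0.
move=> i j; rewrite (ord1 j).
have -> : (f x - f y) i 0 = (('e_i : 'rV[R]_n) *m (f x - f y)) 0 0.
  by rewrite -rowE [RHS]mxE.
have [xi ->] := @mvt_row R n f ('e_i : 'rV[R]_n) x y df.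
rewrite -rowE [X in `|X|]mxE.
apply: le_trans (mxnorm_entry _ i 0) _.
apply: le_trans (mulmx_norm _ _) _.
apply: ler_wpM2r => //.
have [lam [l0 [l1 ->]]] := conv xi.
apply: ler_sum => i' _; apply: ler_sum => j' _; exact: conv_entry.
Qed.


Variables (m p q : nat) (B : 'M[R]_(n, p)) (F : 'M[R]_(p, n)) (H : 'M[R]_(m, n))
  (V : 'M[R]_(n, q)) (alpha : R).
Hypothesis cone : forall x : 'cV[R]_n,
  mxle (0 : 'cV[R]_m) (H *m x) <-> exists y : 'cV[R]_q, mxle 0 y /\ x = V *m y.
Hypothesis HA : forall i, mxle (0 : 'M[R]_(m, q)) (H *m (A i + B *m F + alpha%:M) *m V).

Definition gg x := f x + B *m F *m x.

Lemma mono_key x y : Kc H (x - y) -> Kc H (gg x - gg y + alpha *: (x - y)).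
Proof.
move=> Kxy; have [z [z0 xyE]] := (cone (x - y)).1 Kxy.
move=> j l; rewrite (ord1 l).
have -> : (0 : 'cV[R]_m) j 0 = 0 by rewrite mxE.
have E1 : gg x - gg y + alpha *: (x - y) = (f x - f y) + (B *m F + alpha%:M) *m (x - y).
  rewrite /gg mulmxDl mul_scalar_mx mulmxBr opprD addrACA -addrA; by rewrite !addrA.
rewrite E1 mulmxDr [(H *m (f x - f y) + _) j 0]mxE entry_row.
have [xi Exi] := @mvt_row R n f (row j H) x y df.
rewrite Exi -entry_row.
have -> : (H *m (Dx f xi *m (x - y))) j 0 + (H *m ((B *m F + alpha%:M) *m (x - y))) j 0
  = (H *m (Dx f xi *m (x - y)) + H *m ((B *m F + alpha%:M) *m (x - y))) j 0 by rewrite [RHS]mxE.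
rewrite -mulmxDr -mulmxDl xyE !mulmxA.
have [lam [l0 [l1 ->]]] := conv xi.
have E2 : \sum_l lam l *: A l + (B *m F + alpha%:M) = \sum_l lam l *: (A l + B *m F + alpha%:M).
  rewrite [RHS](eq_bigr (fun l => lam l *: A l + lam l *: (B *m F + alpha%:M))); last first.
    by move=> l' _; rewrite -addrA scalerDr.
  by rewrite big_split /= -scaler_suml l1 scale1r.
rewrite E2; apply: nonneg_mul; last by move=> k'; have := z0 k' 0; rewrite mxE.
move=> i' k'; rewrite mulmx_sumr mulmx_suml summxE; apply: sumr_ge0 => l' _.
rewrite -scalemxAr -scalemxAl mxE; apply: mulr_ge0 => //.
by have := HA l' i' k'; rewrite mxE.
Qed.

End Problem.

Lemma box_upper {R : realType} m r (M : 'M[R]_(m, r)) (wl wu w : 'cV[R]_r) :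
  mxle wl w -> mxle w wu -> mxle (M *m w) (mxpos M *m wu + mxneg M *m wl).
Proof.
move=> h1 h2 j l; rewrite (ord1 l) !mxE -big_split /=; apply: ler_sum => k _; rewrite !mxE.
have := h1 k 0; have := h2 k 0; set a := M j k.
have [ha|ha] := leP 0 a.
  by nra.
nra.
Qed.

Lemma box_lower {R : realType} m r (M : 'M[R]_(m, r)) (wl wu w : 'cV[R]_r) :
  mxle wl w -> mxle w wu -> mxle (mxpos M *m wl + mxneg M *m wu) (M *m w).
Proof.
move=> h1 h2 j l; rewrite (ord1 l) !mxE -big_split /=; apply: ler_sum => k _; rewrite !mxE.
have := h1 k 0; have := h2 k 0; set a := M j k.
have [ha|ha] := leP 0 a.
  by nra.
nra.
Qed.

Arguments gg {R n} f {p}. Arguments LA {R n k}. Arguments LA_ge0 {R n k}.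
Arguments f_lip {R n k f A}.
Arguments mono_key {R n k f A} df conv {m p q B F H V alpha} cone HA.

Theorem theorem5 (R : realType) (n p r m q k : nat)
  (f : 'cV[R]_n -> 'cV[R]_n) (B : 'M[R]_(n, p)) (C : 'M[R]_(n, r))
  (A : 'I_k -> 'M[R]_n)
  (H : 'M[R]_(m, n)) (hl hu : 'cV[R]_m) (V : 'M[R]_(n, q))
  (etal etau : 'cV[R]_n) (wl wu : 'cV[R]_r)
  (F : 'M[R]_(p, n)) (alpha : R) :
  C1 f ->
  (forall x, in_conv A (Dx f x)) ->
  \rank H = n ->
  mxle hl hu ->
  (forall x : 'cV[R]_n,
     mxle (0 : 'cV[R]_m) (H *m x) <-> exists y : 'cV[R]_q, mxle 0 y /\ x = V *m y) ->
  H *m etal = hl -> H *m etau = hu ->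
  mxle wl wu ->
  (forall i, mxle (0 : 'M[R]_(m, q)) (H *m (A i + B *m F + alpha%:M) *m V)) ->
  mxle (H *m (f etau + B *m F *m etau) + mxpos (H *m C) *m wu + mxneg (H *m C) *m wl)
       (0 : 'cV[R]_m) ->
  mxle (0 : 'cV[R]_m)
       (H *m (f etal + B *m F *m etal) + mxpos (H *m C) *m wl + mxneg (H *m C) *m wu) ->
  forall (w : R -> 'cV[R]_r),
    (forall t, 0 <= t -> mxle wl (w t) /\ mxle (w t) wu) ->
    forall x : R -> 'cV[R]_n,
      solution_on_Rplus (fun t z => f z + B *m F *m z + C *m w t) x ->
      in_polytope H hl hu (x 0) ->
      forall t, 0 <= t -> in_polytope H hl hu (x t).
Proof.
move=> [df _] conv _ _ cone Hl Hu _ HA Hup Hlo w Hw x [xc xd] [P0l P0u] t t0.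
pose g := gg f B F.
pose L := LA A + S1 (B *m F).
have L0 : 0 <= L by rewrite addr_ge0 // ?LA_ge0 ?S1_ge0.
have glip : forall u v, `|g u - g v| <= L * `|u - v|.
  move=> u v.
  have -> : g u - g v = (f u - f v) + B *m F *m (u - v).
    rewrite /g /gg mulmxBr; apply/matrixP => i j; rewrite !mxE; ring.
  apply: le_trans (ler_normD _ _) _.
  have := f_lip df conv u v; have := mulmx_norm (B *m F) (u - v).
  rewrite /L; lra.
have xr := within0_cont xc.
have HCw : forall s : R, H *m (C *m w s) = (H *m C) *m w s by move=> s; rewrite mulmxA.
have Kup : Kc H (etau - x t).
  pose phi1 := fun (s : R) (v : 'cV[R]_n) => - (g (etau - v) + C *m w s).
  apply: (@invariance R m n H (fun s => etau - x s) phi1 L alpha) => //.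
  - move=> e e0; have [h h0 Hh] := xr e e0; exists h => // s s0 sh.
    have -> : etau - x 0 - (etau - x s) = x s - x 0 by apply/matrixP => i j; rewrite !mxE; ring.
    by rewrite distrC; exact: Hh.
  - move=> s sp.
    have E : phi1 s (etau - x s) = 0 - (f (x s) + B *m F *m x s + C *m w s).
      rewrite /phi1; have -> : etau - (etau - x s) = x s by rewrite opprB addrC subrK.
      by rewrite sub0r.
    rewrite E.
    exact: (is_deriveB (is_derive_cst etau s 1) (xd s sp)).
  - move=> s u v sp.
    have -> : phi1 s u - phi1 s v = g (etau - v) - g (etau - u).
      by rewrite /phi1; apply/matrixP => i j; rewrite !mxE; ring.
    have -> : u - v = (etau - v) - (etau - u) by apply/matrixP => i j; rewrite !mxE; ring.
    exact: glip.
  - move=> s v sp Kv.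
    have -> : phi1 s v + alpha *: v =
      (g etau - g (etau - v) + alpha *: (etau - (etau - v))) + (- (g etau + C *m w s)).
      rewrite /phi1; have -> : etau - (etau - v) = v by rewrite opprB addrC subrK.
      by apply/matrixP => i j; rewrite !mxE; ring.
    apply: Kc_add.
      apply: (mono_key df conv cone HA).
      by have -> : etau - (etau - v) = v by rewrite opprB addrC subrK.
    move=> i j; rewrite mulmxN mulmxDr HCw.
    have [w1 w2] := Hw s (ltW sp).
    have := @box_upper R m r (H *m C) _ _ _ w1 w2 i j; have := Hup i j.
    by rewrite !mxE; lra.
  - move=> i j; have := P0u i j; rewrite mulmxBr Hu !mxE; lra.
have Klo : Kc H (x t - etal).
  pose phi2 := fun (s : R) (v : 'cV[R]_n) => g (etal + v) + C *m w s.
  apply: (@invariance R m n H (fun s => x s - etal) phi2 L alpha) => //.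
  - move=> e e0; have [h h0 Hh] := xr e e0; exists h => // s s0 sh.
    have -> : x 0 - etal - (x s - etal) = x 0 - x s by apply/matrixP => i j; rewrite !mxE; ring.
    exact: Hh.
  - move=> s sp.
    have E : phi2 s (x s - etal) = (f (x s) + B *m F *m x s + C *m w s) - 0.
      rewrite /phi2; have -> : etal + (x s - etal) = x s by rewrite addrC subrK.
      by rewrite subr0.
    rewrite E.
    exact: (is_deriveB (xd s sp) (is_derive_cst etal s 1)).
  - move=> s u v sp.
    have -> : phi2 s u - phi2 s v = g (etal + u) - g (etal + v).
      by rewrite /phi2; apply/matrixP => i j; rewrite !mxE; ring.
    have -> : u - v = (etal + u) - (etal + v) by apply/matrixP => i j; rewrite !mxE; ring.
    exact: glip.
  - move=> s v sp Kv.
    have -> : phi2 s v + alpha *: v =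
      (g (etal + v) - g etal + alpha *: ((etal + v) - etal)) + (g etal + C *m w s).
      rewrite /phi2; have -> : etal + v - etal = v by rewrite addrC addKr.
      by apply/matrixP => i j; rewrite !mxE; ring.
    apply: Kc_add.
      apply: (mono_key df conv cone HA).
      by have -> : etal + v - etal = v by rewrite addrC addKr.
    move=> i j; rewrite mulmxDr HCw.
    have [w1 w2] := Hw s (ltW sp).
    have := @box_lower R m r (H *m C) _ _ _ w1 w2 i j; have := Hlo i j.
    by rewrite !mxE; lra.
  - move=> i j; have := P0l i j; rewrite mulmxBr Hl !mxE; lra.
split.
  move=> i j; have := Klo i j; rewrite mulmxBr Hl !mxE; lra.
move=> i j; have := Kup i j; rewrite mulmxBr Hu !mxE; lra.
Qed.
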